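(* Let $r\ge 1$ and $n\ge 0$ be integers. Let $A(n,r)$ be the set of partitions of $n$ in which every part occurring with odd multiplicity has multiplicity at least $2r+1$, and let $C(n,r)$ be the set of partitions of $n$ in which every odd part is congruent to $2r+1 \pmod{4r+2}$. For a partition $\lambda=(\lambda_1^{m_1},\lambda_2^{m_2},\ldots)\in A(n,r)$ (multiplicity notation, distinct parts $\lambda_i$ with multiplicities $m_i\ge 1$), define $\beta_r(\lambda)=\bigcup_{i\ge1}\beta_r(\lambda_i^{m_i})$ (multiset union), where: If $\lambda_i$ is even: $\lambda_i^{m_i}\mapsto \lambda_i^{m_i-(2r+2v+2)},(2\lambda_i)^{r+v+1}$ if $m_i\equiv 2v+1 \pmod{2r+1}$ with $0\le v\le r-1$; and $\lambda_i^{m_i}\mapsto \lambda_i^{m_i-2v},(2\lambda_i)^{v}$ if $m_i\equiv 2v\pmod{2r+1}$ with $0\le v\le r$. If $\lambda_i$ is odd: $\lambda_i^{m_i}\mapsto ((2r+1)\lambda_i)^{\frac{m_i-(2r+2v+2)}{2r+1}},(2\lambda_i)^{r+v+1}$ if $m_i\equiv 2v+1\pmod{2r+1}$ with $0\le v\le r-1$; and $\lambda_i^{m_i}\mapsto ((2r+1)\lambda_i)^{\frac{m_i-2v}{2r+1}},(2\lambda_i)^{v}$ if $m_i\equiv 2v\pmod{2r+1}$ with $0\le v\le r$. Then $\beta_r$ is a well-defined bijection from $A(n,r)$ onto $C(n,r)$.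
   Context: A partition is written in multiplicity notation $(\lambda_1^{m_1},\lambda_2^{m_2},\ldots)$, meaning the part $\lambda_i$ appears $m_i$ times; a factor $x^0$ means the part $x$ does not appear. Partitions are regarded as multisets, and $\cup$ denotes multiset union. *)

(* Defs.v *)
From mathcomp Require Import all_boot.
Set Implicit Arguments. Unset Strict Implicit. Unset Printing Implicit Defensive.

(* A partition of n: a nonincreasing list of positive parts summing to n.
   Partitions are multisets; the sorted list is a canonical representative. *)
Definition is_partition (n : nat) (la : seq nat) : Prop :=
  [/\ sorted geq la, all (fun p => 0 < p) la & sumn la = n].

Definition inA (n r : nat) (la : seq nat) : Prop :=
  is_partition n la /\
  (forall p, p \in la -> odd (count_mem p la) -> r.*2.+1 <= count_mem p la).

Definition inC (n r : nat) (la : seq nat) : Prop :=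
  is_partition n la /\
  (forall p, p \in la -> odd p -> p %% (r.*2.+1).*2 = r.*2.+1).

(* For multiplicity m, with t = m mod (2r+1):
   if t = 2v+1 (0 <= v <= r-1): removed amount k = 2r+2v+2, doubled count r+v+1;
   if t = 2v   (0 <= v <= r)  : removed amount k = 2v,      doubled count v. *)
Definition beta_v (r m : nat) : nat := (m %% r.*2.+1)./2.
Definition beta_k (r m : nat) : nat :=
  if odd (m %% r.*2.+1) then 2 * r + 2 * beta_v r m + 2 else 2 * beta_v r m.
Definition beta_d (r m : nat) : nat :=
  if odd (m %% r.*2.+1) then r + beta_v r m + 1 else beta_v r m.

Definition beta_block (r p m : nat) : seq nat :=
  (if odd p then nseq ((m - beta_k r m) %/ r.*2.+1) (r.*2.+1 * p)
   else nseq (m - beta_k r m) p) ++ nseq (beta_d r m) (2 * p).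

(* well-definedness of a block: the multiplicities in the image are
   nonnegative integers (no truncated subtraction, exact division) *)
Definition block_welldef (r p m : nat) : Prop :=
  beta_k r m <= m /\ (odd p -> r.*2.+1 %| m - beta_k r m).

Definition beta (r : nat) (la : seq nat) : seq nat :=
  sort geq (flatten [seq beta_block r p (count_mem p la) | p <- undup la]).

(* Main.v *)
Require Import Defs.
From mathcomp Require Import all_boot.
From mathcomp Require Import zify.

Lemma bk_bd r m : beta_k r m = 2 * beta_d r m.
Proof. rewrite /beta_k /beta_d; case: ifP => _; lia. Qed.

Lemma bd_lt r m : beta_d r m < r.*2.+1.
Proof.
rewrite /beta_d /beta_v; set t := m %% _.
have ht : t < r.*2.+1 by rewrite ltn_pmod.
have := odd_double_half t; case: (odd t) => /= h; lia.
Qed.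

Lemma bd0 r : beta_d r 0 = 0.
Proof. by rewrite /beta_d /beta_v mod0n. Qed.

Lemma bdecomp r m : (odd m -> r.*2.+1 <= m) ->
  beta_k r m <= m /\ m - beta_k r m = r.*2.+1 * ((m - beta_k r m) %/ r.*2.+1).
Proof.
move=> hA.
rewrite /beta_k /beta_v; set s := r.*2.+1; set t := m %% s.
have ht : t < s by rewrite ltn_pmod.
have hm : m = m %/ s * s + t by rewrite /t -divn_eq.
set Q := m %/ s in hm.
have := odd_double_half t.
case ho: (odd t) => /= h.
- have hQ : 0 < Q.
    case: (posnP Q) => // hq0; rewrite hq0 /= in hm.
    have : odd m by rewrite hm ho.
    move/hA; lia.
  have e : m - (2 * r + 2 * t./2 + 2) = s * (Q - 1).
    rewrite mulnBr muln1 [s * Q]mulnC; have hs : s = r.*2.+1 by []; clearbody s Q t; lia.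
  have hle : m - (m - (2 * r + 2 * t./2 + 2)) = 2 * r + 2 * t./2 + 2.
    rewrite e; have hs : s = r.*2.+1 by []; rewrite mulnBr muln1 [s * Q]mulnC; have hQs : s <= Q * s := leq_pmull _ hQ. set X := Q * s in hm hQs *; clearbody s Q t X; lia.
  by rewrite e mulKn //; split; [lia|].
- have e : m - 2 * t./2 = s * Q.
    rewrite [s * Q]mulnC; have hs : s = r.*2.+1 by []; clearbody s Q t; lia.
  have hle : m - (m - 2 * t./2) = 2 * t./2.
    rewrite e; have hs : s = r.*2.+1 by []; rewrite [s * Q]mulnC; clearbody s Q t; lia.
  by rewrite e mulKn //; split; [lia|].
Qed.

Lemma brecomp r e d : d < r.*2.+1 ->
  beta_d r (r.*2.+1 * e + 2 * d) = d.
Proof.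
move=> hd; rewrite /beta_d /beta_v.
have -> : (r.*2.+1 * e + 2 * d) %% r.*2.+1 = (2 * d) %% r.*2.+1.
  by rewrite mulnC -modnDml modnMl add0n.
case: (ltnP (2 * d) r.*2.+1) => h2.
- rewrite modn_small // (_ : 2 * d = (d).*2) ?odd_double ?doubleK //; lia.
- have -> : (2 * d) %% r.*2.+1 = 2 * d - r.*2.+1.
    rewrite -[in LHS](subnK h2) modnDr modn_small //; lia.
  have -> : 2 * d - r.*2.+1 = (d - r - 1).*2.+1 by lia.
  rewrite /= odd_double /= uphalf_half odd_double doubleK add0n.
  lia.
Qed.

Lemma count_block r p m q : count_mem q (beta_block r p m) =
  (if odd p then (r.*2.+1 * p == q) * ((m - beta_k r m) %/ r.*2.+1)
   else (p == q) * (m - beta_k r m)) + (2 * p == q) * beta_d r m.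
Proof. by rewrite /beta_block count_cat; case: ifP => _; rewrite !count_nseq. Qed.

Lemma sum1 (u : seq nat) a h : uniq u -> (a \notin u -> h a = 0) ->
  \sum_(p <- u) (if p == a then h p else 0) = h a.
Proof.
elim: u => [|x u IH] /=.
  by move=> _ ->; rewrite ?big_nil.
case/andP => hx hu ha; rewrite big_cons.
case: eqP => [e|ne].
  rewrite big1_seq ?addn0 -?e // => p /andP [_ hp].
  by case: eqP => // e'; move: hx; rewrite -e' hp.
rewrite add0n IH // => hau; apply: ha.
by rewrite in_cons negb_or hau andbT; apply/eqP => e; apply: ne.
Qed.

Definition cl r (f : nat -> nat) q :=
  if odd q then (if r.*2.+1 %| q then (f (q %/ r.*2.+1) - beta_k r (f (q %/ r.*2.+1))) %/ r.*2.+1 else 0)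
  else (f q - beta_k r (f q)) + beta_d r (f q./2).

Lemma bk0 r : beta_k r 0 = 0.
Proof. by rewrite bk_bd bd0. Qed.

Lemma count_beta r la q :
  count_mem q (beta r la) = cl r (fun p => count_mem p la) q.
Proof.
set f := fun p => count_mem p la.
have f0 : forall p, p \notin undup la -> f p = 0.
  by move=> p; rewrite mem_undup /f => /count_memPn.
have hp : forall l : seq nat, perm_eq (sort geq l) l by move=> l; rewrite perm_sort perm_refl.
rewrite /beta (permP (hp _)) count_flatten -map_comp sumnE big_map.
under eq_bigr => p _ do rewrite /= count_block.
rewrite big_split /=.
rewrite /cl; set s := r.*2.+1.
have hu := undup_uniq la.
case hq: (odd q).
- rewrite [X in _ + X]big1 ?addn0; last first.
    move=> p _; case: eqP => [e|]; last by rewrite mul0n.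
    by move: hq; rewrite -e oddM.
  case hs: (s %| q).
  + rewrite -(@sum1 _ (q %/ s) (fun p => (f p - beta_k r (f p)) %/ s) hu); last first.
      by move=> /f0 ->; rewrite bk0.
    apply: eq_bigr => p _.
    case: (eqVneq p (q %/ s)) => [->|hne] /=.
    * have hodd : odd (q %/ s).
        by move: hq; rewrite -{1}(divnK hs) oddM andbC => /andP [].
      by rewrite hodd [s * _]mulnC (divnK hs) eqxx mul1n.
    * case: ifP => ho.
      - case: eqP => [e|]; last by rewrite mul0n.
        by move/eqP: hne => hne; exfalso; apply: hne; rewrite -e mulKn.
      - case: eqP => [e|]; last by rewrite mul0n.
        by move: ho; rewrite e hq.
  + rewrite big1 //= => p _.
    case: ifP => ho.
    * case: eqP => [e|]; last by rewrite mul0n.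
      by move: hs; rewrite -e dvdn_mulr.
    * case: eqP => [e|]; last by rewrite mul0n.
      by move: ho; rewrite e hq.
- congr (_ + _).
  + rewrite -(@sum1 _ (q) (fun p => f p - beta_k r (f p)) hu); last first.
      by move=> /f0 ->; rewrite bk0.
    apply: eq_bigr => p _.
    case: ifP => ho.
    * case: eqP => [e|_]; first by move: hq; rewrite -e oddM ho /s /= odd_double.
      case: eqP => [e|_]; first by move: hq; rewrite -e ho.
      by rewrite mul0n.
    * by case: eqP => [->|]; rewrite ?mul1n ?mul0n.
  + rewrite -(@sum1 _ (q./2) (fun p => beta_d r (f p)) hu); last first.
      by move=> /f0 ->; rewrite bd0.
    apply: eq_bigr => p _.
    have hq2 : q = 2 * q./2 by rewrite mul2n even_halfK // hq.
    rewrite [in X in (_ == X)]hq2 eqn_mul2l /=.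
    by case: eqP; rewrite ?mul1n ?mul0n.
Qed.

Definition E r m := (m - beta_k r m) %/ r.*2.+1.

Lemma decomp r m : (odd m -> r.*2.+1 <= m) ->
  m - beta_k r m = r.*2.+1 * E r m /\ m = r.*2.+1 * E r m + 2 * beta_d r m.
Proof.
move=> h; have [hk he] := bdecomp _ _ h; rewrite /E -he; split => //.
by rewrite -bk_bd subnK.
Qed.

Lemma recompE r e d : d < r.*2.+1 -> E r (r.*2.+1 * e + 2 * d) = e.
Proof.
move=> hd; rewrite /E bk_bd brecomp // addnK mulKn //.
Qed.

Lemma mem_count (x : nat) l : (x \in l) = (0 < count_mem x l).
Proof. by rewrite -has_pred1 has_count. Qed.

Lemma cl_ext r f g q : (forall p, f p = g p) -> cl r f q = cl r g q.
Proof. by move=> h; rewrite /cl !h. Qed.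


Lemma c1 r f (hf : forall p, odd (f p) -> r.*2.+1 <= f p) p : cl r f (2 * p) = r.*2.+1 * E r (f (2 * p)) + beta_d r (f p).
Proof.
rewrite /cl mul2n odd_double doubleK.
by have [-> _] := decomp _ _ (hf (p.*2)).
Qed.

Lemma c2 r f p : odd p -> cl r f (r.*2.+1 * p) = E r (f p).
Proof.
move=> hp; rewrite /cl oddM /= odd_double hp /= dvdn_mulr // mulKn //.
Qed.

Lemma c3 r f (hf : forall p, odd (f p) -> r.*2.+1 <= f p) p : ~~ odd p -> cl r f p = r.*2.+1 * E r (f p) + beta_d r (f p./2).
Proof.
by move=> hp; rewrite /cl (negbTE hp); have [-> _] := decomp _ _ (hf p).
Qed.

Lemma cl_inj r f g :
  (forall p, odd (f p) -> r.*2.+1 <= f p) ->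
  (forall p, odd (g p) -> r.*2.+1 <= g p) ->
  (forall q, cl r f q = cl r g q) -> forall p, f p = g p.
Proof.
move=> hf hg h p.
have hD : beta_d r (f p) = beta_d r (g p).
  have := h (2 * p); rewrite (c1 _ _ hf) (c1 _ _ hg) => /(congr1 (modn^~ r.*2.+1)).
  by rewrite mulnC modnMDl mulnC modnMDl !modn_small ?bd_lt.
have hE : E r (f p) = E r (g p).
  case hp: (odd p).
  - by have := h (r.*2.+1 * p); rewrite (c2 _ f) // (c2 _ g).
  - have := h p; rewrite (c3 _ _ hf) ?hp // (c3 _ _ hg) ?hp // => /(congr1 (divn^~ r.*2.+1)).
    by rewrite mulnC divnMDl // mulnC divnMDl // !divn_small ?bd_lt // !addn0.
have [_ ef] := decomp _ _ (hf p); have [_ eg] := decomp _ _ (hg p).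
by rewrite ef eg hD hE.
Qed.

Definition M r (g : nat -> nat) p :=
  if odd p then r.*2.+1 * g (r.*2.+1 * p) + 2 * (g (2 * p) %% r.*2.+1)
  else r.*2.+1 * (g p %/ r.*2.+1) + 2 * (g (2 * p) %% r.*2.+1).

Lemma recompK r e d : d < r.*2.+1 ->
  r.*2.+1 * e + 2 * d - beta_k r (r.*2.+1 * e + 2 * d) = r.*2.+1 * e.
Proof. by move=> hd; rewrite bk_bd brecomp // addnK. Qed.

Lemma cl_M r g : (forall q, odd q -> ~~ (r.*2.+1 %| q) -> g q = 0) ->
  forall q, cl r (M r g) q = g q.
Proof.
move=> hg q; rewrite /cl.
have hlt : forall x, x %% r.*2.+1 < r.*2.+1 by move=> x; rewrite ltn_pmod.
case hq: (odd q).
- case hs: (r.*2.+1 %| q); last by rewrite hg // hs.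
  set p := q %/ r.*2.+1.
  have eq : q = r.*2.+1 * p by rewrite mulnC divnK.
  have hp : odd p by move: hq; rewrite eq oddM => /andP [].
  by rewrite /M hp -eq recompK // mulKn.
- have hq2 : 2 * q./2 = q by rewrite mul2n even_halfK // hq.
  have -> : beta_d r (M r g q./2) = g q %% r.*2.+1.
    by rewrite /M; case: ifP => _; rewrite hq2 brecomp.
  by rewrite /M hq recompK // mulnC -divn_eq.
Qed.

Lemma Acount n r la : inA n r la -> forall p, odd (count_mem p la) -> r.*2.+1 <= count_mem p la.
Proof.
move=> [_ h] p ho; case hp: (p \in la); first exact: h.
by move: ho; move/negbT/count_memPn: hp => ->.
Qed.

Lemma sum_beta r la : (forall p, odd (count_mem p la) -> r.*2.+1 <= count_mem p la) ->
  sumn (beta r la) = sumn la.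
Proof.
move=> hA.
rewrite /beta (perm_sumn (_ : perm_eq _ (flatten [seq beta_block r p (count_mem p la) | p <- undup la]))); last by rewrite perm_sort perm_refl.
rewrite -[in RHS](perm_sumn (perm_count_undup la)) !sumn_flatten -!map_comp.
congr sumn; apply: eq_map => p /=.
rewrite /beta_block sumn_cat !sumn_nseq.
have [hk he] := decomp _ _ (hA p).
set m := count_mem p la in hk he *.
rewrite hk; case: ifP => _; rewrite ?mulKn // !sumn_nseq [in RHS]he; set e := E r m; set d := beta_d r m. all: nia.
Qed.

Lemma mem_le_sumn (x : nat) l : x \in l -> x <= sumn l.
Proof.
elim: l => [|y l IH] //=; rewrite in_cons => /orP [/eqP ->|/IH]; lia.
Qed.

Lemma geq_trans' : transitive geq.
Proof. move=> y x z /= h1 h2; exact: leq_trans h2 h1. Qed.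

Lemma geq_anti : antisymmetric geq.
Proof. move=> x y /andP [h1 h2]; apply/eqP; rewrite eqn_leq; apply/andP; split; assumption. Qed.

Lemma geq_total : total geq.
Proof. move=> x y; exact: leq_total y x. Qed.

Lemma count_nseqs (u : seq nat) h q : uniq u -> (forall q, q \notin u -> h q = 0) ->
  count_mem q (flatten [seq nseq (h p) p | p <- u]) = h q.
Proof.
move=> hu h0; rewrite count_flatten -map_comp sumnE big_map.
rewrite -(@sum1 u q h hu (h0 q)); apply: eq_bigr => p _ /=.
by rewrite count_nseq /=; case: eqP; rewrite ?mul1n ?mul0n.
Qed.

Lemma count_eq_perm (l1 l2 : seq nat) : (forall x, count_mem x l1 = count_mem x l2) -> perm_eq l1 l2.
Proof. by move=> h; apply/allP => x _; apply/eqP. Qed.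

Lemma mod2s r p : odd p -> r.*2.+1 %| p -> p %% (r.*2.+1).*2 = r.*2.+1.
Proof.
move=> hp /dvdnP [j ej].
have hj : odd j by move: hp; rewrite ej oddM => /andP [].
have -> : p = j./2 * (r.*2.+1).*2 + r.*2.+1.
  rewrite ej -{1}(odd_double_half j) hj; rewrite -!mul2n; lia.
by rewrite modnMDl modn_small // -addnn; lia.
Qed.

Lemma M_A r g p : odd (M r g p) -> r.*2.+1 <= M r g p.
Proof.
have key : forall c d, odd (r.*2.+1 * c + 2 * d) -> r.*2.+1 <= r.*2.+1 * c + 2 * d.
  move=> c d; rewrite oddD oddM mul2n odd_double /= odd_double /= addbF => hc.
  apply: leq_trans (leq_addr _ _); rewrite leq_pmulr //; case: c hc => //.
by rewrite /M; case: ifP => _; apply: key.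
Qed.

Theorem mainTheorem1 (n r : nat) (hr : 1 <= r) :
  (forall la, inA n r la -> forall p, p \in la -> block_welldef r p (count_mem p la)) /\
  (forall la, inA n r la -> inC n r (beta r la)) /\
  (forall la mu, inA n r la -> inA n r mu -> beta r la = beta r mu -> la = mu) /\
  (forall mu, inC n r mu -> exists la, inA n r la /\ beta r la = mu).
Proof.
split; [|split; [|split]].
- move=> la hla p _; have [hk he] := bdecomp r _ (Acount _ _ _ hla p).
  by split => // _; rewrite he dvdn_mulr.
- move=> la hla; have hA := Acount _ _ _ hla; have [[hs hpos hsum] _] := hla.
  have f0 : count_mem 0 la = 0.
    apply/count_memPn/negP => h0; by move/allP: hpos => /(_ _ h0).
  split; [split|].
  + exact: sort_sorted geq_total _.
  + apply/allP => x; rewrite mem_count count_beta; case: x => //.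
    by rewrite /cl /= f0 bk0 bd0.
  + by rewrite sum_beta.
  + move=> p; rewrite mem_count count_beta /cl => + hp; rewrite hp.
    by case: ifP => // hsd _; rewrite mod2s.
- move=> la mu hla hmu he.
  have hc := @cl_inj r (fun p => count_mem p la) (fun p => count_mem p mu)
     (Acount _ _ _ hla) (Acount _ _ _ hmu) (fun q => etrans (esym (count_beta r la q)) (etrans (congr1 (count_mem q) he) (count_beta r mu q))).
  case: hla => [[sla _ _] _]; case: hmu => [[smu _ _] _].
  exact: (sorted_eq geq_trans' geq_anti sla smu (@count_eq_perm la mu hc)).
- move=> mu [[hs hpos hsum] hodd].
  set g := fun q => count_mem q mu.
  have hg : forall q, odd q -> ~~ (r.*2.+1 %| q) -> g q = 0.
    move=> q hq hd; apply/count_memPn/negP => hin.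
    move: hd; have e := hodd q hin hq.
    rewrite /dvdn -(modn_dvdm q (dvdn_mull 2 (dvdnn r.*2.+1))) mul2n e.
    by rewrite modnn.
  have gz : forall x, (x == 0) || (n < x) -> g x = 0.
    move=> x hx; apply/count_memPn/negP => hin.
    have h1 := mem_le_sumn _ _ hin; rewrite hsum in h1.
    move/allP: hpos => /(_ _ hin) h2; move: hx h1 h2; lia.
  have hM0 : forall q, q \notin iota 1 n -> M r g q = 0.
    move=> q; rewrite mem_iota negb_and -leqNgt -ltnNge => hq.
    have hq' : (q == 0) || (n < q) by move: hq; lia.
    case/orP: hq' => [/eqP ->|hq'].
      rewrite /M /= muln0; have g0 : g 0 = 0 by apply: gz. by rewrite g0 div0n mod0n !muln0.
    have hsq : q <= r.*2.+1 * q := leq_pmull _ (ltn0Sn _).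
    have g1 : g (r.*2.+1 * q) = 0 by apply: gz; rewrite (leq_trans hq' hsq) orbT.
    have g2 : g (2 * q) = 0 by apply: gz; apply/orP; right; move: hq'; lia.
    have g3 : g q = 0 by apply: gz; rewrite hq' orbT.
    by rewrite /M g1 g2 g3 div0n mod0n !muln0; case: ifP.
  set la := sort geq (flatten [seq nseq (M r g p) p | p <- iota 1 n]).
  have hcount : forall q, count_mem q la = M r g q.
    move=> q; rewrite /la (permP (_ : perm_eq _ (flatten [seq nseq (M r g p) p | p <- iota 1 n]))); last by rewrite perm_sort perm_refl.
    by rewrite count_nseqs // iota_uniq.
  have hlaA : forall p, odd (count_mem p la) -> r.*2.+1 <= count_mem p la.
    by move=> p; rewrite hcount; apply: M_A.
  have hbeta : beta r la = mu.
    apply: (sorted_eq geq_trans' geq_anti (sort_sorted geq_total _) hs).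
    apply: count_eq_perm => x.
    by rewrite count_beta (@cl_ext r _ (M r g) x hcount) (cl_M _ _ hg).
  exists la; split => //; split; [split|].
  + exact: sort_sorted geq_total _.
  + apply/allP => x; rewrite mem_count hcount => hx.
    have : x \in iota 1 n by apply: contraLR hx => /hM0 ->.
    by rewrite mem_iota => /andP [].
  + by rewrite -(sum_beta _ _ hlaA) hbeta.
  + by move=> p _; apply: hlaA.
Qed.
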